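(* Let $X=\{1,\dots,n\}$, $Y$ finite, $Q$ a symmetric irreducible stochastic matrix on $Y$ (notation in context). Let $2\le k\le n$, let $\underline a$ be a type with $a_0+\cdots+a_m=k$, $A\subseteq X$ with $|A|=k$, and $F\in P_{k,\underline a,A}$. Then $$D^*_{k,\underline a}D_{k,\underline a}F=|Y|\,(k-\ell(\underline a))\,F+Q_kF.$$
   Context: $Q$ acts on $L(Y)$ by $(Qf)(y)=\sum_{y'}q(y,y')f(y')$, with distinct eigenvalues $\lambda_0=1,\dots,\lambda_m$ and eigenspaces $W_0$ (constants), $W_1,\dots,W_m$; $\sum_yf(y)=0$ for $f\in W_j$, $j\ge1$. $\Theta_k$: functions $\theta$ with $\mathrm{dom}(\theta)$ a $k$-subset of $X$ and values in $Y$; $\varphi\subseteq\theta$ means $\mathrm{dom}\varphi\subseteq\mathrm{dom}\theta$ and $\theta|_{\mathrm{dom}\varphi}=\varphi$. $D_k:L(\Theta_k)\to L(\Theta_{k-1})$, $(D_kF)(\varphi)=\sum_{\theta\supseteq\varphi}F(\theta)$; $D_k^*:L(\Theta_{k-1})\to L(\Theta_k)$, $(D_k^*F)(\theta)=\sum_{\varphi\subseteq\theta}F(\varphi)$. Types $\underline a=(a_0,\dots,a_m)$, $\ell(\underline a)=a_1+\cdots+a_m$, $\underline a'=(a_0-1,a_1,\dots,a_m)$. A fundamental function of type $\underline a$ on a $k$-set $A$ is $F=\bigotimes_{j\in A}F^j$ ($F(\theta)=\prod_{j\in A}F^j(\theta(j))$ on $Y^A$, $0$ elsewhere) with each $F^j$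 in some $W_{i_j}$ and exactly $a_i$ indices $j$ with $i_j=i$; $P_{k,\underline a,A}$ is their span and $P_{k,\underline a}=\bigoplus_AP_{k,\underline a,A}$ ($=\{0\}$ if a type entry is negative). $D_{k,\underline a}$ is the restriction of $D_k$ to $P_{k,\underline a}$ (with values in $P_{k-1,\underline a'}$) and $D^*_{k,\underline a}$ the restriction of $D^*_k$ to $P_{k-1,\underline a'}$. The operator $Q_k$ on $L(\Theta_k)$ is defined on a fundamental function $F=\bigotimes_{j\in A}F^j$ and extended linearly: for $\theta\in\Theta_k$ with $|\mathrm{dom}\theta\cap A|=k-1$, $A\setminus\mathrm{dom}\theta=\{i\}$, $\mathrm{dom}\theta\setminus A=\{i_0\}$, set $(Q_kF)(\theta)=|Y|F(\bar\theta)$ if $F^i\in W_0$ and $(Q_kF)(\theta)=0$ if $F^i\notin W_0$, where $\bar\theta\in Y^A$ agrees with $\theta$ on $A\setminus\{i\}$ and $\bar\theta(i)=\theta(i_0)$; for all other $\theta$, $(Q_kF)(\theta)=0$. *)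

(* Defs.v *)
From HB Require Import structures.
From mathcomp Require Import all_boot all_order all_algebra.
Set Implicit Arguments. Unset Strict Implicit. Unset Printing Implicit Defensive.
Import Order.TTheory GRing.Theory Num.Theory.
Local Open Scope ring_scope.

Section Defs.
Variable R : realFieldType.
Variable Y : finType.

Definition Qop (q : Y -> Y -> R) (f : Y -> R) : Y -> R :=
  fun y => \sum_(y' : Y) q y y' * f y'.

Definition symmetric_stochastic_irreducible (q : Y -> Y -> R) : Prop :=
  [/\ forall y y', q y y' = q y' y,
      forall y y', 0 <= q y y',
      forall y, \sum_(y' : Y) q y y' = 1 &
      forall y y', connect (fun u v => 0 < q u v) y y'].

Definition is_eigenvalue (q : Y -> Y -> R) (l : R) : Prop :=
  exists f : Y -> R, (exists y, f y != 0) /\ forall y, Qop q f y = l * f y.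

Definition eigen_enum (q : Y -> Y -> R) (m : nat) (lam : 'I_m.+1 -> R) : Prop :=
  [/\ lam ord0 = 1, injective lam,
      forall i, is_eigenvalue q (lam i) &
      forall l, is_eigenvalue q l -> exists i, lam i = l].

Definition inW (q : Y -> Y -> R) m (lam : 'I_m.+1 -> R) (i : 'I_m.+1) (f : Y -> R) : bool :=
  [forall y, Qop q f y == lam i * f y].

Variable n : nat.
Definition pfun := {ffun 'I_n -> option Y}.
Definition dom (t : pfun) : {set 'I_n} := [set j | t j != None].
Definition psub (phi t : pfun) : bool :=
  [forall j, (phi j == None) || (phi j == t j)].

(* D_k : L(Theta_k) -> L(Theta_{k-1}) and D_k^* : L(Theta_{k-1}) -> L(Theta_k);
   functions on Theta_j are represented as functions on all partial functions,
   only their values on Theta_j matter. *)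
Definition Dk (k : nat) (F : pfun -> R) : pfun -> R :=
  fun phi => \sum_(t : pfun | (#|dom t| == k) && psub phi t) F t.
Definition Dkstar (k : nat) (G : pfun -> R) : pfun -> R :=
  fun t => \sum_(phi : pfun | (#|dom phi| == k.-1) && psub phi t) G phi.

Definition evalj (Fj : 'I_n -> Y -> R) (t : pfun) (j : 'I_n) : R :=
  match t j with Some y => Fj j y | None => 0 end.

Definition fund (A : {set 'I_n}) (Fj : 'I_n -> Y -> R) (t : pfun) : R :=
  if dom t == A then \prod_(j in A) evalj Fj t j else 0.

Definition fund_data (q : Y -> Y -> R) m (lam : 'I_m.+1 -> R)
    (a : 'I_m.+1 -> nat) (A : {set 'I_n})
    (idx : 'I_n -> 'I_m.+1) (Fj : 'I_n -> Y -> R) : Prop :=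
  (forall j, j \in A -> inW q lam (idx j) (Fj j)) /\
  (forall i, #|[set j in A | idx j == i]| = a i).

Definition ell m (a : 'I_m.+1 -> nat) : nat := (\sum_(i < m.+1 | i != ord0) a i)%N.

Definition Qk (q : Y -> Y -> R) m (lam : 'I_m.+1 -> R) (k : nat)
    (A : {set 'I_n}) (Fj : 'I_n -> Y -> R) (t : pfun) : R :=
  if #|dom t :&: A| == k.-1 then
    match [pick i in A :\: dom t], [pick i0 in dom t :\: A] with
    | Some i, Some i0 =>
        if inW q lam ord0 (Fj i) then
          let tbar : pfun :=
            [ffun j => if j == i then t i0 else if j \in A then t j else None] in
          #|Y|%:R * fund A Fj tbar
        else 0
    | _, _ => 0
    end
  else 0.

End Defs.

(* Main.v *)
Require Import Defs.
From HB Require Import structures.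
From mathcomp Require Import all_boot all_order all_algebra zify ring.
Import Order.TTheory GRing.Theory Num.Theory.
Local Open Scope ring_scope.

Section Helpers.
Variable R : realFieldType.
Variable Y : finType.
Variable n : nat.
Local Notation pf := (pfun Y n).

Definition extf (phi : pf) i (y : Y) : pf := [ffun j => if j == i then Some y else phi j].
Definition remf (t : pf) i : pf := [ffun j => if j == i then None else t j].

Lemma dom_ext phi i y : dom (extf phi i y) = i |: dom phi.
Proof. by apply/setP=> j; rewrite !inE ffunE; case: (j == i). Qed.

Lemma dom_rem t i : dom (remf t i) = dom t :\ i.
Proof. by apply/setP=> j; rewrite !inE ffunE; case: (j == i). Qed.

Lemma psub_dom (phi t : pf) : psub phi t -> dom phi \subset dom t.
Proof.
move=> /forallP ps; apply/subsetP => j; rewrite !inE.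
by case/orP: (ps j) => /eqP ->.
Qed.

Lemma Dk_fund k (A : {set 'I_n}) (Fj : 'I_n -> Y -> R) (phi : pf) i (y0 : Y) :
  i \notin dom phi -> A = i |: dom phi -> #|A| = k ->
  Dk k (fund A Fj) phi = (\prod_(x in A | x != i) evalj Fj phi x) * \sum_y Fj i y.
Proof.
move=> ni hA hk; rewrite /Dk.
transitivity (\sum_(t : pf | [&& #|dom t| == k, psub phi t & dom t == A]) fund A Fj t).
  rewrite [LHS]big_mkcond [RHS]big_mkcond; apply: eq_bigr => t _.
  rewrite /fund andbA; case: (dom t == A); rewrite ?andbT ?andbF //.
  by case: ifP.
rewrite (reindex_onto (extf phi i) (fun t : pf => odflt y0 (t i))); last first.
  move=> t /and3P [_ /forallP ps /eqP dA]; apply/ffunP => j; rewrite ffunE.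
  case: eqP => [->|ji].
    have : i \in dom t by rewrite dA hA setU11.
    by rewrite inE; case: (t i).
  case/orP: (ps j) => [/eqP pj | /eqP //]; rewrite pj.
  have : j \notin dom t by rewrite dA hA !inE (introF eqP ji) /= pj.
  by rewrite inE negbK => /eqP ->.
rewrite mulr_sumr; apply: eq_big => [y | y _].
  rewrite ffunE eqxx /= dom_ext -hA eqxx hk eqxx /= eqxx andbT.
  apply/andP; split => //.
  apply/forallP => j; rewrite ffunE; case: (j =P i) => [->|_]; last by rewrite eqxx orbT.
  by move: ni; rewrite inE negbK => ->.
rewrite /fund dom_ext -hA eqxx mulrC.
have iA : i \in A by rewrite hA setU11.
rewrite (bigD1 i) //= /evalj ffunE eqxx; congr (_ * _).
apply: eq_bigr => j /andP[_ ji]; by rewrite ffunE (negbTE ji).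
Qed.

Lemma Dk_fund0 k (A : {set 'I_n}) (Fj : 'I_n -> Y -> R) (phi : pf) :
  ~~ (dom phi \subset A) -> Dk k (fund A Fj) phi = 0.
Proof.
move=> ns; apply: big1 => t /andP[_ ps]; rewrite /fund; case: eqP => // dA.
by move: ns; rewrite -dA psub_dom.
Qed.

Lemma Dkstar_rem k (G : pf -> R) (t : pf) (j0 : 'I_n) :
  #|dom t| = k -> (0 < k)%N -> Dkstar k G t = \sum_(j in dom t) G (remf t j).
Proof.
move=> ht k0; rewrite /Dkstar.
rewrite (reindex_onto (remf t) (fun phi : pf => odflt j0 [pick x in dom t :\: dom phi])); last first.
  move=> phi /andP[/eqP hc ps].
  have sub := psub_dom _ _ ps.
  have : #|dom t :\: dom phi| == 1%N.
    rewrite cardsD (setIidPr sub) ht hc; apply/eqP; lia.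
  case/cards1P => x hx; rewrite hx.
  case: pickP => [z|]; last by move/(_ x); rewrite !inE eqxx.
  rewrite inE => /eqP -> /=.
  have xD : x \in dom t :\: dom phi by rewrite hx set11.
  apply/ffunP => y; rewrite ffunE; case: eqP => [->|yx].
    by move: xD; rewrite !inE negbK => /andP[/eqP -> _].
  case/orP: (forallP ps y) => [/eqP pj | /eqP //]; rewrite pj.
  case e: (t y) => [v|] //.
  have : y \in dom t :\: dom phi by rewrite !inE pj e.
  by rewrite hx inE => /eqP.
apply: eq_bigl => j.
have ps : psub (remf t j) t.
  by apply/forallP => x; rewrite ffunE; case: (x == j); rewrite eqxx ?orbT.
rewrite ps dom_rem andbT.
case: (boolP (j \in dom t)) => jd.
  have -> : dom t :\: (dom t :\ j) = [set j].
    apply/setP => x; rewrite !inE; case: (x =P j) => [->|_] /=; last by rewrite andNb.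
    by move: jd; rewrite inE => ->.
  have -> : #|dom t :\ j| = k.-1 by move: (cardsD1 j (dom t)); rewrite jd ht => ->.
  rewrite eqxx /=; case: pickP => [z|]; last by move/(_ j); rewrite inE eqxx.
  by rewrite inE => /eqP ->; rewrite /= eqxx.
have -> : dom t :\ j = dom t.
  by apply/setP => x; rewrite !inE; case: (x =P j) => // ->; move: jd; rewrite inE => /negbTE ->.
by rewrite ht; apply/negbTE; apply/eqP; lia.
Qed.

End Helpers.

Section Spec.
Variable R : realFieldType.
Variable Y : finType.
Variable q : Y -> Y -> R.
Hypothesis hq : symmetric_stochastic_irreducible q.
Variable m : nat.
Variable lam : 'I_m.+1 -> R.
Hypothesis hlam : eigen_enum q lam.

Lemma W0_const f : inW q lam ord0 f -> forall y y', f y = f y'.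
Proof.
case: hq => sym pos row conn; case: hlam => l0 _ _ _.
move=> /forallP W y y'.
have [z _ zmax] := @arg_maxP _ R _ y xpredT f isT.
have key : forall u v, 0 < q u v -> f u = f z -> f v = f z.
  move=> u v quv fu.
  have e0 : \sum_w q u w * (f z - f w) = 0.
    have := eqP (W u); rewrite l0 mul1r /Qop => e.
    under eq_bigr do rewrite mulrBr.
    by rewrite sumrB -mulr_suml row mul1r e fu subrr.
  have ge : forall w : Y, true -> 0 <= q u w * (f z - f w).
    by move=> w _; rewrite mulr_ge0 // subr_ge0; exact: zmax.
  have := psumr_eq0P ge e0 (i:=v) isT.
  by move/eqP; rewrite mulf_eq0 (gt_eqF quv) /= subr_eq0 => /eqP ->.
have cl : closed (fun u v => 0 < q u v) [pred x | f x == f z].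
  move=> u v quv; rewrite !inE; apply/eqP/eqP.
    exact: key.
  by apply: key; rewrite sym.
have hy := closed_connect cl (conn z y).
have hy' := closed_connect cl (conn z y').
move: hy hy'; rewrite !inE eqxx => /esym/eqP -> /esym/eqP -> //.
Qed.

Lemma sum_W0 f y0 : inW q lam ord0 f -> \sum_y f y = #|Y|%:R * f y0.
Proof.
move=> W; rewrite (eq_bigr (fun _ => f y0)) => [|y _]; last exact: W0_const.
by rewrite sumr_const mulr_natl.
Qed.

Lemma sum_Wi i f : i != ord0 -> inW q lam i f -> \sum_y f y = 0.
Proof.
case: hq => sym pos row conn; case: hlam => l0 inj _ _.
move=> i0 /forallP W.
have e1 : \sum_y Qop q f y = \sum_y f y.
  rewrite /Qop exchange_big; apply: eq_bigr => y' _.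
  rewrite -mulr_suml; under eq_bigr do rewrite sym.
  by rewrite row mul1r.
have e2 : \sum_y Qop q f y = lam i * \sum_y f y.
  by rewrite mulr_sumr; apply: eq_bigr => y _; apply/eqP; exact: W.
have : (lam i - 1) * \sum_y f y = 0 by rewrite mulrBl mul1r -e2 e1 subrr.
move/eqP; rewrite mulf_eq0 subr_eq0 -l0 => /orP[/eqP/inj e|/eqP //].
by move: i0; rewrite e eqxx.
Qed.

End Spec.

Lemma pick_set1 (T : finType) (i : T) : [pick x in [set i]] = Some i.
Proof. by case: pickP => [z|/(_ i)]; rewrite in_set1 ?eqxx // => /eqP ->. Qed.

Section Main1.
Variable R : realFieldType.
Variable Y : finType.
Variable n : nat.
Variable q : Y -> Y -> R.
Hypothesis hq : symmetric_stochastic_irreducible q.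
Variable m : nat.
Variable lam : 'I_m.+1 -> R.
Hypothesis hlam : eigen_enum q lam.
Variable k : nat.
Variable a : 'I_m.+1 -> nat.
Variable A : {set 'I_n}.
Variable idx : 'I_n -> 'I_m.+1.
Variable Fj : 'I_n -> Y -> R.
Hypothesis hk : (2 <= k)%N.
Hypothesis hA : #|A| = k.
Hypothesis hfd : fund_data q lam a A idx Fj.

Lemma main1 (t : pfun Y n) : #|dom t| = k ->
  Dkstar k (Dk k (fund A Fj)) t
  = #|Y|%:R * (a ord0)%:R * fund A Fj t + Qk q lam k A Fj t.
Proof.
move=> ht.
case: hfd => hW hcard.
have [j0 j0d] : exists j, j \in dom t.
  by apply/set0Pn; rewrite -card_gt0 ht; lia.
have [y0 ty0] : exists y, t j0 = Some y.
  by move: j0d; rewrite inE; case: (t j0) => // y _; exists y.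
rewrite (@Dkstar_rem R Y n k _ t j0 ht); last lia.
case: (boolP (dom t == A)) => [/eqP dA | ndA].
  have Qk0 : Qk q lam k A Fj t = 0.
    by rewrite /Qk dA setIid hA; case: ifP => // /eqP; lia.
  rewrite Qk0 addr0.
  transitivity (\sum_(j in A) (if idx j == ord0 then #|Y|%:R * fund A Fj t else 0)).
    rewrite dA; apply: eq_bigr => j jA.
    rewrite (@Dk_fund R Y n k A Fj (remf Y n t j) j y0); first last.
    - exact: hA.
    - by rewrite dom_rem dA setD1K.
    - by rewrite dom_rem !inE eqxx.
    have : j \in dom t by rewrite dA.
    rewrite inE; case ej: (t j) => [yj|] // _.
    have ep : \prod_(x in A | x != j) evalj Fj (remf Y n t j) x
            = \prod_(x in A | x != j) evalj Fj t x.
      by apply: eq_bigr => x /andP[_ xj]; rewrite /evalj ffunE (negbTE xj).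
    rewrite ep.
    case: (boolP (idx j == ord0)) => hi; last first.
      by rewrite (@sum_Wi R Y q hq m lam hlam _ _ hi (hW j jA)) mulr0.
    have W0 := hW j jA; rewrite (eqP hi) in W0.
    rewrite (@sum_W0 R Y q hq m lam hlam _ yj W0) /fund dA eqxx (bigD1 j jA) /= [evalj Fj t j]/evalj ej.
    by rewrite mulrCA; congr (_ * _); rewrite mulrC.
  rewrite -big_mkcondr /=.
  rewrite (eq_bigl (fun j => j \in [set j in A | idx j == ord0])) => [|j]; last by rewrite inE.
  rewrite sumr_const hcard; ring.
have -> : fund A Fj t = 0 by rewrite /fund (negbTE ndA).
rewrite mulr0 add0r.
case: (boolP (#|dom t :&: A| == k.-1)) => hc.
  have c1 : #|dom t :\: A| == 1%N by rewrite cardsD (eqP hc) ht; apply/eqP; lia.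
  have c2 : #|A :\: dom t| == 1%N by rewrite cardsD setIC (eqP hc) hA; apply/eqP; lia.
  case/cards1P: c1 => i0 h0; case/cards1P: c2 => i h1.
  have mi0 : forall x, (x \notin A) && (x \in dom t) = (x == i0).
    by move=> x; rewrite -in_set1 -h0 in_setD.
  have mi : forall x, (x \notin dom t) && (x \in A) = (x == i).
    by move=> x; rewrite -in_set1 -h1 in_setD.
  have /andP[i0A i0d] : (i0 \notin A) && (i0 \in dom t) by rewrite mi0.
  have /andP[id iA] : (i \notin dom t) && (i \in A) by rewrite mi.
  have [yi0 ti0] : exists y, t i0 = Some y.
    by move: i0d; rewrite inE; case: (t i0) => // y _; exists y.
  rewrite (bigD1 i0 i0d) big1 /= ?addr0; last first.
    move=> j /andP[jd ji0]; apply: Dk_fund0; rewrite dom_rem; apply/negP => /subsetP S.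
    have : i0 \in dom t :\ j by rewrite in_setD1 eq_sym ji0 i0d.
    by move/S; rewrite (negbTE i0A).
  rewrite (@Dk_fund R Y n k A Fj (remf Y n t i0) i y0); first last.
  - exact: hA.
  - rewrite dom_rem; apply/setP => x; rewrite in_setU1 in_setD1.
    case: (x =P i) => [->|/eqP xi] /=; first by rewrite iA.
    have := mi0 x; have := mi x; rewrite (negbTE xi).
    by case: (x \in A); case: (x \in dom t); rewrite ?andbF //= => _ <-.
  - by rewrite dom_rem in_setD1 (negbTE id) andbF.
  rewrite /Qk hc h0 h1 !pick_set1.
  case: (boolP (inW q lam ord0 (Fj i))) => Wi; last first.
    have hi : idx i != ord0 by apply/eqP => e; move: Wi; rewrite -e hW.
    by rewrite (@sum_Wi R Y q hq m lam hlam _ _ hi (hW i iA)) mulr0.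
  rewrite (@sum_W0 R Y q hq m lam hlam _ yi0 Wi).
  set tb := [ffun j => _].
  have dtb : dom tb = A.
    apply/setP => x; rewrite inE ffunE; case: (x =P i) => [->|/eqP xi]; first by rewrite ti0 iA.
    case xA: (x \in A) => //.
    have := mi x; rewrite xA (negbTE xi) andbT => /negbFE.
    by rewrite inE.
  rewrite /fund dtb eqxx (bigD1 i iA) /= {2}/evalj ffunE eqxx ti0.
  have -> : \prod_(j in A | j != i) evalj Fj tb j
          = \prod_(x in A | x != i) evalj Fj (remf Y n t i0) x.
    apply: eq_bigr => x /andP[xA xi]; rewrite /evalj !ffunE (negbTE xi) xA.
    have -> : (x == i0) = false by apply/eqP => e; move: i0A; rewrite -e xA.
    by [].
  by rewrite mulrCA [Fj i yi0 * _]mulrC.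
have Qk0 : Qk q lam k A Fj t = 0 by rewrite /Qk (negbTE hc).
rewrite Qk0; apply: big1 => j jd; apply: Dk_fund0; rewrite dom_rem; apply/negP => S.
have s1 : dom t :\ j \subset dom t :&: A by rewrite subsetI subD1set S.
have c1 : #|dom t :\ j| = k.-1 by move: (cardsD1 j (dom t)); rewrite jd ht => ->.
have le1 := subset_leq_card s1.
have le2 : (#|dom t :&: A| <= #|dom t|)%N := subset_leq_card (subsetIl _ _).
have eqc : #|dom t :&: A| = #|dom t|.
  move/eqP: hc => hc; lia.
have [_ E] := subset_leqif_cards (subsetIl (dom t) A).
move: E; rewrite eqc eqxx => /esym/eqP dI.
have sA : dom t \subset A by rewrite -dI subsetIr.
have [_ E2] := subset_leqif_cards sA.
by move: E2 ndA; rewrite ht hA eqxx => <-.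
Qed.

End Main1.

Theorem lemma7p4 (R : realFieldType) (Y : finType) (n : nat)
    (q : Y -> Y -> R) (m : nat) (lam : 'I_m.+1 -> R)
    (k : nat) (a : 'I_m.+1 -> nat) (A : {set 'I_n})
    (N : nat) (c : 'I_N -> R) (idx : 'I_N -> 'I_n -> 'I_m.+1)
    (Fs : 'I_N -> 'I_n -> Y -> R) :
  symmetric_stochastic_irreducible q ->
  eigen_enum q lam ->
  (2 <= k <= n)%N ->
  (\sum_(i < m.+1) a i)%N = k ->
  #|A| = k ->
  (forall s, fund_data q lam a A (idx s) (Fs s)) ->
  let F := fun t : pfun Y n => \sum_(s < N) c s * fund A (Fs s) t in
  forall t : pfun Y n, #|dom t| = k ->
    Dkstar k (Dk k F) t
    = #|Y|%:R * (k%:R - (ell a)%:R) * F t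
      + \sum_(s < N) c s * Qk q lam k A (Fs s) t.
Proof.
move=> hq hlam /andP[hk hkn] hsum hA hfd F t ht.
have lin : forall phi, Dk k F phi = \sum_s c s * Dk k (fund A (Fs s)) phi.
  move=> phi; rewrite /Dk /F exchange_big /=; apply: eq_bigr => s _.
  by rewrite mulr_sumr.
have lhs : Dkstar k (Dk k F) t = \sum_s c s * Dkstar k (Dk k (fund A (Fs s))) t.
  rewrite /Dkstar; under eq_bigr do rewrite lin.
  rewrite exchange_big /=; apply: eq_bigr => s _.
  by rewrite mulr_sumr.
rewrite lhs.
under eq_bigr do rewrite (@main1 R Y n q hq m lam hlam k a A _ _ hk hA (hfd _) t ht).
have a0 : (k%:R - (ell a)%:R : R) = (a ord0)%:R.
  by rewrite /ell -hsum (bigD1 ord0) //= natrD addrK.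
rewrite a0 /F mulr_sumr -big_split; apply: eq_bigr => s _ /=.
ring.
Qed.
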